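(* For all integers $6\le n\le m$, \[ \gamma_{2t}(K_n\Box K_m)\ge\min\bigl\{\gamma_{2t}(K_3\Box K_3)+\gamma_{2t}(K_{n-3}\Box K_{m-3}),\ \gamma_{2t}(K_4\Box K_4)+\gamma_{2t}(K_{n-4}\Box K_{m-4})\bigr\}. \]
   Context: For a graph $G=(V,E)$, a set $S\subseteq V$ is a total $2$-dominating set if every vertex of $V$ (including those in $S$) is adjacent to at least $2$ vertices of $S$; $\gamma_{2t}(G)$ is the minimum cardinality of such a set. $G\Box H$ denotes the Cartesian product: vertex set $V(G)\times V(H)$, with $(u_1,v_1)\sim(u_2,v_2)$ iff either $u_1=u_2$ and $v_1\sim v_2$, or $v_1=v_2$ and $u_1\sim u_2$. $K_n$ is the complete graph on $n$ vertices. *)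

(* Defs.v *)
From mathcomp Require Import all_boot.
Set Implicit Arguments. Unset Strict Implicit. Unset Printing Implicit Defensive.

Definition total2dom (T : finType) (e : rel T) (S : {set T}) : bool :=
  [forall v : T, 1 < #|[set u in S | e v u]|].

(* gamma_{2t}: minimum cardinality of a total 2-dominating set
   (defaults to #|T| if none exists; never relevant below). *)
Definition gamma2t (T : finType) (e : rel T) : nat :=
  \big[minn/#|T|]_(S : {set T} | total2dom e S) #|S|.

Definition KK_rel (n m : nat) : rel ('I_n * 'I_m) :=
  fun x y => ((x.1 == y.1) && (x.2 != y.2)) || ((x.2 == y.2) && (x.1 != y.1)).

Definition gamma2tKK (n m : nat) : nat := gamma2t (@KK_rel n m).
Arguments KK_rel : clear implicits.

(* Main.v *)
Require Import Defs.
From mathcomp Require Import all_boot zify.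
Set Implicit Arguments. Unset Strict Implicit. Unset Printing Implicit Defensive.
Lemma gamma_ub n m (S : {set 'I_n * 'I_m}) :
  total2dom (KK_rel n m) S -> gamma2tKK n m <= #|S|.
Proof.
move=> HS; rewrite /gamma2tKK /gamma2t.
have : S \in index_enum {set 'I_n * 'I_m} by rewrite mem_index_enum.
elim: (index_enum _) => [//|a r IH]; rewrite inE big_cons => /orP [/eqP <-|/IH H].
  by rewrite HS geq_minl.
by case: ifP => _ //; rewrite geq_min H orbT.
Qed.

Lemma gamma_lb n m L :
  L <= n * m -> (forall S : {set 'I_n * 'I_m}, total2dom (KK_rel n m) S -> L <= #|S|) ->
  L <= gamma2tKK n m.
Proof.
move=> Hnm HS; rewrite /gamma2tKK /gamma2t.
apply: (big_ind (fun x => L <= x)).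
- by rewrite card_prod !card_ord.
- by move=> x y Hx Hy; rewrite leq_min Hx Hy.
- exact: HS.
Qed.


Definition goodb n m (S : {set 'I_n * 'I_m}) : bool :=
  [&& total2dom (KK_rel n m) S, [forall i, exists j, (i, j) \in S]
   & [forall j, exists i, (i, j) \in S]].

Definition Reach x y s := exists S : {set 'I_x * 'I_y}, goodb S /\ #|S| = s.

Lemma t2dP n m (S : {set 'I_n * 'I_m}) :
  (forall v, exists u1 u2, [/\ u1 \in S, u2 \in S, u1 != u2, KK_rel n m v u1 & KK_rel n m v u2]) ->
  total2dom (KK_rel n m) S.
Proof.
move=> H; apply/forallP => v; apply/card_gt1P.
have [u1 [u2 [H1 H2 H3 H4 H5]]] := H v.
by exists u1, u2; rewrite !inE H1 H2 H4 H5.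
Qed.

Lemma t2dE n m (S : {set 'I_n * 'I_m}) v : total2dom (KK_rel n m) S ->
  exists u1 u2, [/\ u1 \in S, u2 \in S, u1 != u2, KK_rel n m v u1 & KK_rel n m v u2].
Proof.
move=> /forallP /(_ v) /card_gt1P [u1 [u2 []]]; rewrite !inE => /andP[? ?] /andP[? ?] ?.
by exists u1, u2.
Qed.



Definition fL x1 x2 y1 y2 (u : 'I_x1 * 'I_y1) : 'I_(x1 + x2) * 'I_(y1 + y2) :=
  (lshift x2 u.1, lshift y2 u.2).
Definition fR x1 x2 y1 y2 (u : 'I_x2 * 'I_y2) : 'I_(x1 + x2) * 'I_(y1 + y2) :=
  (rshift x1 u.1, rshift y1 u.2).

Arguments fL {x1} x2 {y1} y2 u.
Arguments fR x1 {x2} y1 {y2} u.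

Lemma fL_inj x1 x2 y1 y2 : injective (@fL x1 x2 y1 y2).
Proof. by move=> [a b] [c d] H; have := congr1 snd H; have := congr1 fst H; rewrite /= => /lshift_inj -> /lshift_inj ->. Qed.
Lemma fR_inj x1 x2 y1 y2 : injective (@fR x1 x2 y1 y2).
Proof. by move=> [a b] [c d] H; have := congr1 snd H; have := congr1 fst H; rewrite /= => /rshift_inj -> /rshift_inj ->. Qed.

Definition bsum x1 x2 y1 y2 (S1 : {set 'I_x1 * 'I_y1}) (S2 : {set 'I_x2 * 'I_y2}) :
  {set 'I_(x1 + x2) * 'I_(y1 + y2)} :=
  (@fL x1 x2 y1 y2) @: S1 :|: (@fR x1 x2 y1 y2) @: S2.

Lemma rook_fL x1 x2 y1 y2 u v :
  KK_rel _ _ (@fL x1 x2 y1 y2 u) (fL x2 y2 v) = KK_rel _ _ u v.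
Proof. by rewrite /KK_rel /fL /= !(inj_eq (@lshift_inj _ _)). Qed.
Lemma rook_fR x1 x2 y1 y2 u v :
  KK_rel _ _ (@fR x1 x2 y1 y2 u) (fR x1 y1 v) = KK_rel _ _ u v.
Proof. by rewrite /KK_rel /fR /= !(inj_eq (@rshift_inj _ _)). Qed.

Lemma reach_sum x1 x2 y1 y2 s1 s2 :
  Reach x1 y1 s1 -> Reach x2 y2 s2 -> Reach (x1 + x2) (y1 + y2) (s1 + s2).
Proof.
move=> [S1 [/and3P [T1 /forallP R1 /forallP C1] <-]] [S2 [/and3P [T2 /forallP R2 /forallP C2] <-]].
exists (bsum S1 S2); split; last first.
  rewrite /bsum cardsU !card_imset; [|exact: fR_inj|exact: fL_inj].
  suff -> : fL x2 y2 @: S1 :&: fR x1 y1 @: S2 = set0 by rewrite cards0 subn0.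
  apply/setP => w; rewrite !inE; apply/negP => /andP [/imsetP [u _ ->] /imsetP [u' _]].
  by move/(congr1 fst) => /= /eqP; rewrite eq_lrshift.
have inL u : u \in S1 -> fL x2 y2 u \in bsum S1 S2 by move=> H; rewrite !inE mem_imset ?H //; exact: fL_inj.
have inR u : u \in S2 -> fR x1 y1 u \in bsum S1 S2 by move=> H; rewrite !inE mem_imset ?H ?orbT //; exact: fR_inj.
apply/and3P; split.
- apply: t2dP => [[a b]].
  case: (splitP a) => [i Ha|i Ha]; [have -> : a = lshift x2 i by apply: val_inj|have -> : a = rshift x1 i by apply: val_inj];
  (case: (splitP b) => [j Hb|j Hb]; [have -> : b = lshift y2 j by apply: val_inj|have -> : b = rshift y1 j by apply: val_inj]).
  + have [u1 [u2 [H1 H2 H3 H4 H5]]] := t2dE (i, j) T1.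
    exists (fL x2 y2 u1), (fL x2 y2 u2); split; try by apply: inL.
      by rewrite (inj_eq (@fL_inj _ _ _ _)).
      by rewrite -[(lshift _ _, _)]/(fL x2 y2 (i, j)) rook_fL.
    by rewrite -[(lshift _ _, _)]/(fL x2 y2 (i, j)) rook_fL.
  + have /existsP [j1 Hj1] := R1 i. have /existsP [i2 Hi2] := C2 j.
    exists (fL x2 y2 (i, j1)), (fR x1 y1 (i2, j)); split; try by [apply: inL|apply: inR].
      by rewrite /fL /fR xpair_eqE /= eq_lrshift.
      by rewrite /KK_rel /fL /= eqxx eq_rlshift.
    by rewrite /KK_rel /fR /= eqxx eq_lrshift orbT.
  + have /existsP [j1 Hj1] := R2 i. have /existsP [i2 Hi2] := C1 j.
    exists (fR x1 y1 (i, j1)), (fL x2 y2 (i2, j)); split; try by [apply: inL|apply: inR].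
      by rewrite /fL /fR xpair_eqE /= eq_rlshift.
      by rewrite /KK_rel /fR /= eqxx eq_lrshift.
    by rewrite /KK_rel /fL /= eqxx eq_rlshift orbT.
  + have [u1 [u2 [H1 H2 H3 H4 H5]]] := t2dE (i, j) T2.
    exists (fR x1 y1 u1), (fR x1 y1 u2); split; try by apply: inR.
      by rewrite (inj_eq (@fR_inj _ _ _ _)).
      by rewrite -[(rshift _ _, _)]/(fR x1 y1 (i, j)) rook_fR.
    by rewrite -[(rshift _ _, _)]/(fR x1 y1 (i, j)) rook_fR.
- apply/forallP => a; case: (splitP a) => [i Ha|i Ha]; [have -> : a = lshift x2 i by apply: val_inj|have -> : a = rshift x1 i by apply: val_inj].
    by have /existsP [j Hj] := R1 i; apply/existsP; exists (lshift y2 j); apply: (inL (i, j)).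
  by have /existsP [j Hj] := R2 i; apply/existsP; exists (rshift y1 j); apply: (inR (i, j)).
- apply/forallP => b; case: (splitP b) => [j Hb|j Hb]; [have -> : b = lshift y2 j by apply: val_inj|have -> : b = rshift y1 j by apply: val_inj].
    by have /existsP [i Hi] := C1 j; apply/existsP; exists (lshift x2 i); apply: (inL (i, j)).
  by have /existsP [i Hi] := C2 j; apply/existsP; exists (rshift x1 i); apply: (inR (i, j)).
Qed.

Lemma full_reach p q : 0 < p -> 0 < q -> (2 < q) || (2 < p) || ((1 < p) && (1 < q)) ->
  Reach p q (p * q).
Proof.
move=> p0 q0 Hpq; exists setT; split; last by rewrite cardsT card_prod !card_ord.
apply/and3P; split; last first.
- by apply/forallP => j; apply/existsP; exists (Ordinal p0); rewrite inE.
- by apply/forallP => i; apply/existsP; exists (Ordinal q0); rewrite inE.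
apply: t2dP => [[i j]].
have cj : #|[set~ j]| = q.-1 by rewrite cardsC1 card_ord.
have ci : #|[set~ i]| = p.-1 by rewrite cardsC1 card_ord.
case/orP: Hpq => [/orP [Hq|Hp]|/andP [Hp Hq]].
- have /card_gt1P [j1 [j2 [H1 H2 H3]]] : 1 < #|[set~ j]| by rewrite cj; lia.
  exists (i, j1), (i, j2); rewrite !inE /KK_rel /= eqxx xpair_eqE eqxx /=.
  by move: H1 H2; rewrite !in_setC1 => H1 H2; rewrite ![j == _]eq_sym H1 H2 H3.
- have /card_gt1P [j1 [j2 [H1 H2 H3]]] : 1 < #|[set~ i]| by rewrite ci; lia.
  exists (j1, j), (j2, j); rewrite !inE /KK_rel /= eqxx xpair_eqE eqxx andbT /=.
  move: H1 H2; rewrite !in_setC1 => H1 H2; rewrite ![i == _]eq_sym H1 H2 H3.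
  by rewrite !orbT.
- have /card_gt0P [j1 H1] : 0 < #|[set~ j]| by rewrite cj; lia.
  have /card_gt0P [i1 H2] : 0 < #|[set~ i]| by rewrite ci; lia.
  move: H1 H2; rewrite !in_setC1 => H1 H2.
  exists (i, j1), (i1, j); rewrite !inE /KK_rel /= !eqxx xpair_eqE /=.
  by rewrite ![j == _]eq_sym ![i == _]eq_sym (negbTE H1) (negbTE H2).
Qed.

Lemma reach00 : Reach 0 0 0.
Proof.
exists set0; split; last by rewrite cards0.
apply/and3P; split; apply/forallP; by case=> [] [].
Qed.

Lemma reach_cone ax ay sb : Reach ax ay sb ->
  forall i j, Reach (ax + i + 3 * j) (ay + 3 * i + j) (sb + 3 * i + 3 * j).
Proof.
have R13 : Reach 1 3 3 by apply: (full_reach (p:=1) (q:=3)).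
have R31 : Reach 3 1 3 by apply: (full_reach (p:=3) (q:=1)).
move=> Hb; elim=> [|i IH] j.
  elim: j => [|j IHj]; first by move: Hb; congr Reach; lia.
  have := reach_sum IHj R31.
  by congr Reach; lia.
have := reach_sum (IH j) R13; congr Reach; lia.
Qed.

Definition o3 (k : nat) (H : k < 3) : 'I_3 := Ordinal H.
Definition S33 : {set 'I_3 * 'I_3} :=
  [set u in [:: (o3 (isT : 0 < 3), o3 (isT : 0 < 3)); (o3 (isT : 0 < 3), o3 (isT : 1 < 3));
     (o3 (isT : 0 < 3), o3 (isT : 2 < 3)); (o3 (isT : 1 < 3), o3 (isT : 2 < 3));
     (o3 (isT : 2 < 3), o3 (isT : 2 < 3))]].

Lemma S33_card : #|S33| <= 5.
Proof. by rewrite cardsE; apply: (leq_trans (card_size _)). Qed.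

Lemma S33_t2d : total2dom (KK_rel 3 3) S33.
Proof.
apply: t2dP => [[[[|[|[|//]]] Hi] [[|[|[|//]]] Hj]]].
- by exists (o3 (isT : 0 < 3), o3 (isT : 1 < 3)), (o3 (isT : 0 < 3), o3 (isT : 2 < 3)); rewrite !inE.
- by exists (o3 (isT : 0 < 3), o3 (isT : 0 < 3)), (o3 (isT : 0 < 3), o3 (isT : 2 < 3)); rewrite !inE.
- by exists (o3 (isT : 0 < 3), o3 (isT : 0 < 3)), (o3 (isT : 0 < 3), o3 (isT : 1 < 3)); rewrite !inE.
- by exists (o3 (isT : 0 < 3), o3 (isT : 0 < 3)), (o3 (isT : 1 < 3), o3 (isT : 2 < 3)); rewrite !inE.
- by exists (o3 (isT : 0 < 3), o3 (isT : 1 < 3)), (o3 (isT : 1 < 3), o3 (isT : 2 < 3)); rewrite !inE.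
- by exists (o3 (isT : 0 < 3), o3 (isT : 2 < 3)), (o3 (isT : 2 < 3), o3 (isT : 2 < 3)); rewrite !inE.
- by exists (o3 (isT : 0 < 3), o3 (isT : 0 < 3)), (o3 (isT : 2 < 3), o3 (isT : 2 < 3)); rewrite !inE.
- by exists (o3 (isT : 0 < 3), o3 (isT : 1 < 3)), (o3 (isT : 2 < 3), o3 (isT : 2 < 3)); rewrite !inE.
- by exists (o3 (isT : 0 < 3), o3 (isT : 2 < 3)), (o3 (isT : 1 < 3), o3 (isT : 2 < 3)); rewrite !inE.
Qed.

Lemma ord_neq n (a b : 'I_n) : val a != val b -> a != b.
Proof. by apply: contra => /eqP ->. Qed.

Lemma two_rows x y (S : {set 'I_x * 'I_y}) : 1 < x -> 1 < y ->
  S = [set u | val u.2 < 2] -> total2dom (KK_rel x y) S /\ #|S| <= 2 * x.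
Proof.
move=> Hx Hy ->.
have x0 : 0 < x by lia. have y0 : 0 < y by lia.
set j0 := Ordinal y0. set j1 := Ordinal Hy.
split; last first.
  have -> : [set u : 'I_x * 'I_y | val u.2 < 2] = setX setT [set j : 'I_y | val j < 2].
    by apply/setP => [[a b]]; rewrite !inE.
  rewrite cardsX cardsT card_ord mulnC leq_mul2r.
  apply/orP; right; apply: (leq_trans (subset_leq_card (B := [set j0; j1]) _)).
    apply/subsetP => j; rewrite !inE => Hj; apply/orP.
    by case: j Hj => [[|[|k]] Hk] // _; [left|right]; apply/eqP; apply: val_inj.
  by rewrite cards2.
apply: t2dP => [[i j]].
set i' : 'I_x := if val i == 0 then Ordinal Hx else Ordinal x0.
have Hi' : i' != i by apply: ord_neq; rewrite /i'; case: ifP => /eqP /=; lia.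
case: (ltnP j 2) => Hj.
- set j' : 'I_y := if val j == 0 then j1 else j0.
  have Hj' : j' != j by apply: ord_neq; rewrite /j'; case: ifP => /eqP /=; lia.
  have Hj'2 : val j' < 2 by rewrite /j'; case: ifP.
  exists (i, j'), (i', j); rewrite !inE /KK_rel /= Hj Hj'2 !eqxx /=.
  rewrite xpair_eqE negb_and eq_sym Hi' /=.
  by rewrite eq_sym Hj' orbT.
- exists (i, j0), (i, j1); rewrite !inE /KK_rel /= !eqxx /= xpair_eqE /=.
  have A : j != j0 by apply: ord_neq; rewrite /j0 /=; lia.
  have B : j != j1 by apply: ord_neq; rewrite /j1 /=; lia.
  have C : j0 != j1 by apply: ord_neq.
  by rewrite A B eqxx (negbTE C).
Qed.

Definition Rset n m (S : {set 'I_n * 'I_m}) i := [set u in S | u.1 == i].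
Definition Cset n m (S : {set 'I_n * 'I_m}) j := [set u in S | u.2 == j].
Definition rc n m (S : {set 'I_n * 'I_m}) i := #|Rset S i|.
Definition cc n m (S : {set 'I_n * 'I_m}) j := #|Cset S j|.

Lemma helper1 x a b c : x <= a + b -> x + 2 * c <= (c + a) + (c + b).
Proof. lia. Qed.

Lemma nbr_le n m (S : {set 'I_n * 'I_m}) v :
  #|[set u in S | KK_rel n m v u]| + 2 * (v \in S) <= rc S v.1 + cc S v.2.
Proof.
have sub : [set u in S | KK_rel n m v u] \subset (Rset S v.1 :\ v) :|: (Cset S v.2 :\ v).
  apply/subsetP => u; rewrite !inE /KK_rel => /andP [uS /orP [/andP [e1 e2]|/andP [e1 e2]]].
    have uv : u != v by apply: contraNneq e2 => ->.
    by rewrite uv uS [u.1 == _]eq_sym e1.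
  have uv : u != v by apply: contraNneq e2 => ->.
  by rewrite uv uS [u.2 == _]eq_sym e1 orbT.
have := subset_leq_card sub.
have := (leq_card_setU (Rset S v.1 :\ v) (Cset S v.2 :\ v)).1.
rewrite /rc /cc (cardsD1 v (Rset S v.1)) (cardsD1 v (Cset S v.2)).
have -> : (v \in Rset S v.1) = (v \in S) by rewrite !inE eqxx andbT.
have -> : (v \in Cset S v.2) = (v \in S) by rewrite !inE eqxx andbT.
move=> h1 h2; apply: helper1; exact: leq_trans h2 h1.
Qed.

Lemma card_rows n m (S : {set 'I_n * 'I_m}) (A : {set 'I_n * 'I_m}) :
  #|A| = \sum_i #|[set u in A | u.1 == i]|.
Proof.
rewrite -sum1_card (partition_big (fun u => u.1) predT) //=.
by apply: eq_bigr => i _; rewrite -sum1_card; apply: eq_bigl => u; rewrite !inE.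
Qed.

Lemma card_cols n m (A : {set 'I_n * 'I_m}) :
  #|A| = \sum_j #|[set u in A | u.2 == j]|.
Proof.
rewrite -sum1_card (partition_big (fun u => u.2) predT) //=.
by apply: eq_bigr => i _; rewrite -sum1_card; apply: eq_bigl => u; rewrite !inE.
Qed.

Lemma nbr2 n m (S : {set 'I_n * 'I_m}) v : total2dom (KK_rel n m) S ->
  2 + 2 * (v \in S) <= rc S v.1 + cc S v.2.
Proof.
move=> /forallP /(_ v) H; apply: leq_trans (nbr_le S v); by rewrite leq_add2r.
Qed.

Lemma caseA_row n m (S : {set 'I_n * 'I_m}) i0 :
  total2dom (KK_rel n m) S -> rc S i0 = 0 -> 2 * m <= #|S|.
Proof.
move=> T H0; rewrite (card_cols S).
have -> : 2 * m = \sum_(j : 'I_m) 2 by rewrite sum_nat_const card_ord mulnC.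
apply: leq_sum => j _; have := nbr2 (i0, j) T; rewrite /= H0 /cc /Cset => h; rewrite add0n in h; exact: leq_trans (leq_addr _ _) h.
Qed.

Lemma caseA_col n m (S : {set 'I_n * 'I_m}) j0 :
  total2dom (KK_rel n m) S -> cc S j0 = 0 -> 2 * n <= #|S|.
Proof.
move=> T H0; rewrite (card_rows S S).
have -> : 2 * n = \sum_(i : 'I_n) 2 by rewrite sum_nat_const card_ord mulnC.
apply: leq_sum => i _; have := nbr2 (i, j0) T; rewrite /= H0 /rc /Rset addn0 => h; exact: leq_trans (leq_addr _ _) h.
Qed.

Lemma line_bound (T : finType) (A : {set T}) (g : T -> nat) (t : bool) :
  0 < #|A| -> (forall u, u \in A -> 4 <= g u) ->
  (#|A| = 1 -> forall u, u \in A -> g u = 16) ->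
  (#|A| = 2 -> forall u, u \in A -> g u = 10) ->
  (#|A| = 3 -> ~~ t -> exists2 u, u \in A & 10 <= g u) ->
  16 <= \sum_(u in A) g u + 4 * t.
Proof.
move=> A0 H4 H1 H2 H3.
have base : #|A| * 4 <= \sum_(u in A) g u.
  by rewrite -sum_nat_const; apply: leq_sum.
case E : #|A| => [|[|[|[|k]]]]; first by rewrite E in A0.
- rewrite (eq_bigr (fun _ => 16)); last by move=> u; apply: H1.
  by rewrite sum_nat_const E; lia.
- rewrite (eq_bigr (fun _ => 10)); last by move=> u; apply: H2.
  by rewrite sum_nat_const E; lia.
- case: t H3 => H3; first by rewrite E in base; lia.
  have [u0 Hu0 Hg] := H3 E isT.
  have : #|A| * 4 + (g u0 - 4) <= \sum_(u in A) g u.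
    have -> : \sum_(u in A) g u = \sum_(u in A) (4 + (g u - 4)).
      by apply: eq_bigr => u Hu; have := H4 u Hu; lia.
    rewrite big_split /= sum_nat_const leq_add2l (bigD1 u0) //=.
    exact: leq_addr.
  by rewrite E; lia.
- by rewrite E in base; lia.
Qed.

Definition w n m (S : {set 'I_n * 'I_m}) u :=
  if rc S u.1 == 1 then 16 else if cc S u.2 == 1 then 4 else 10.
Definition tightR n m (S : {set 'I_n * 'I_m}) i :=
  (rc S i == 3) && (Rset S i \subset [set u | cc S u.2 == 1]).
Definition tightC n m (S : {set 'I_n * 'I_m}) j :=
  (cc S j == 3) && (Cset S j \subset [set u | rc S u.1 == 1]).

Lemma key4 n m (S : {set 'I_n * 'I_m}) u : total2dom (KK_rel n m) S -> u \in S ->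
  4 <= rc S u.1 + cc S u.2.
Proof. by move=> T uS; have := nbr2 u T; rewrite uS. Qed.

Lemma w_le n m (S : {set 'I_n * 'I_m}) u : 4 <= w S u <= 16.
Proof. by rewrite /w; case: ifP => _ //; case: ifP. Qed.

Lemma row_bound n m (S : {set 'I_n * 'I_m}) i : total2dom (KK_rel n m) S -> 0 < rc S i ->
  16 <= \sum_(u in Rset S i) w S u + 4 * tightR S i.
Proof.
move=> T H0; apply: line_bound => //.
- by move=> u _; have /andP [] := w_le S u.
- move=> H1 u; rewrite inE => /andP [uS /eqP ui].
  by rewrite /w ui /rc H1.
- move=> H2 u; rewrite inE => /andP [uS /eqP ui].
  have K := key4 T uS; rewrite /w ui /rc H2 /=.
  move: K; rewrite ui /rc H2; case: ifP => // /eqP ->; by [].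
- move=> H3; rewrite /tightR /rc H3 eqxx /= => /subsetPn [u uA].
  rewrite inE => Hc; exists u => //; move: uA; rewrite inE => /andP [uS /eqP ui].
  by rewrite /w ui /rc H3 /= (negbTE Hc).
Qed.

Lemma col_bound n m (S : {set 'I_n * 'I_m}) j : total2dom (KK_rel n m) S -> 0 < cc S j ->
  16 <= \sum_(u in Cset S j) (20 - w S u) + 4 * tightC S j.
Proof.
move=> T H0; apply: line_bound => //.
- by move=> u _; have /andP [_] := w_le S u; lia.
- move=> H1 u; rewrite inE => /andP [uS /eqP uj].
  have K := key4 T uS; rewrite /w uj /cc H1 /=.
  move: K; rewrite uj /cc H1; case: ifP => // /eqP ->; by [].
- move=> H2 u; rewrite inE => /andP [uS /eqP uj].
  have K := key4 T uS; rewrite /w uj /cc H2 /=.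
  move: K; rewrite uj /cc H2; case: ifP => // /eqP ->; by [].
- move=> H3; rewrite /tightC /cc H3 eqxx /= => /subsetPn [u uA].
  rewrite inE => Hc; exists u => //; move: uA; rewrite inE => /andP [uS /eqP uj].
  by rewrite /w uj /cc H3 /= (negbTE Hc).
Qed.

Lemma sum_ind (T : finType) (P : pred T) : \sum_i 4 * P i = 4 * #|[set i | P i]|.
Proof.
rewrite -big_distrr /= -sum1_card; congr (4 * _); rewrite [RHS]big_mkcond /=.
by apply: eq_bigr => i _; rewrite inE; case: (P i).
Qed.

Lemma sum_ind1 (T : finType) (P : pred T) : \sum_i (P i : nat) = #|[set i | P i]|.
Proof.
rewrite -sum1_card [RHS]big_mkcond /=.
by apply: eq_bigr => i _; rewrite inE; case: (P i).
Qed.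

Lemma total_bound n m (S : {set 'I_n * 'I_m}) : total2dom (KK_rel n m) S ->
  (forall i, 0 < rc S i) -> (forall j, 0 < cc S j) ->
  16 * n + 16 * m <= 20 * #|S| + 4 * #|[set i | tightR S i]| + 4 * #|[set j | tightC S j]|.
Proof.
move=> T HR HC.
have e1 : \sum_(u in S) w S u = \sum_i \sum_(u in Rset S i) w S u.
  rewrite (partition_big (fun u => u.1) predT) //=.
  by apply: eq_bigr => i _; apply: eq_bigl => u; rewrite !inE.
have e2 : \sum_(u in S) (20 - w S u) = \sum_j \sum_(u in Cset S j) (20 - w S u).
  rewrite (partition_big (fun u => u.2) predT) //=.
  by apply: eq_bigr => i _; apply: eq_bigl => u; rewrite !inE.
have e3 : 20 * #|S| = \sum_(u in S) w S u + \sum_(u in S) (20 - w S u).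
  have E : \sum_(u in S) (w S u + (20 - w S u)) = \sum_(u in S) 20.
    by apply: eq_bigr => u _; have /andP [_ h] := w_le S u; rewrite subnKC //; apply: leq_trans h _.
  by rewrite big_split /= sum_nat_const mulnC in E.
have r1 : 16 * n <= \sum_i (\sum_(u in Rset S i) w S u + 4 * tightR S i).
  have -> : 16 * n = \sum_(i : 'I_n) 16 by rewrite sum_nat_const card_ord mulnC.
  by apply: leq_sum => i _; apply: row_bound.
have c1 : 16 * m <= \sum_j (\sum_(u in Cset S j) (20 - w S u) + 4 * tightC S j).
  have -> : 16 * m = \sum_(j : 'I_m) 16 by rewrite sum_nat_const card_ord mulnC.
  by apply: leq_sum => j _; apply: col_bound.
rewrite big_split /= sum_ind -e1 in r1.
rewrite big_split /= sum_ind -e2 in c1.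
rewrite e3.
move: r1 c1; set a := \sum_(u in S) w S u; set b := \sum_(u in S) (20 - w S u).
set x := #|[set i | tightR S i]|; set y := #|[set j | tightC S j]|.
lia.
Qed.

Lemma count_rows n m (S : {set 'I_n * 'I_m}) :
  #|[set i | tightR S i]| + 3 * #|[set j | tightC S j]| <= n.
Proof.
set X := [set u in S | tightC S u.2].
have cX : #|X| = 3 * #|[set j | tightC S j]|.
  rewrite (card_cols X).
  have E : forall j, #|[set u in X | u.2 == j]| = 3 * tightC S j.
    move=> j; case Ht : (tightC S j).
      have -> : [set u in X | u.2 == j] = Cset S j.
        apply/setP => u; rewrite !inE; case: (u.2 =P j) => [->|]; by rewrite ?Ht ?andbT ?andbF.
      by move: Ht; rewrite /tightC => /andP [/eqP H3 _]; rewrite -/(cc S j) H3.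
    rewrite muln0; apply/eqP; rewrite cards_eq0; apply/eqP/setP => u; rewrite !inE.
    by case: (u.2 =P j) => [->|]; rewrite ?Ht ?andbF.
  by rewrite (eq_bigr _ (fun j _ => E j)) -big_distrr /= sum_ind1.
have inj : {in X &, injective (fun u : 'I_n * 'I_m => u.1)}.
  move=> u u'; rewrite !inE => /andP [uS tu] /andP [u'S tu'] e.
  have : u \in [set x | rc S x.1 == 1].
    by move: tu => /andP [_ /subsetP]; apply; rewrite !inE uS eqxx.
  rewrite inE /rc => /cards1P [x Ex].
  have : u \in Rset S u.1 by rewrite !inE uS eqxx.
  have : u' \in Rset S u.1 by rewrite !inE u'S e eqxx.
  by rewrite Ex !inE => /eqP -> /eqP ->.
have cI := card_in_imset inj.
have dis : [set i | tightR S i] :&: [set u.1 | u in X] = set0.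
  apply/setP => i; rewrite !inE; apply/negP => /andP [/andP [/eqP h _] /imsetP [u uX Ei]]; subst.
  move: uX; rewrite !inE => /andP [uS /andP [_ /subsetP sub]].
  have := sub u; rewrite !inE uS eqxx => /(_ isT) /eqP.
  by move=> h1; have := etrans (esym h) h1.
have := max_card ([set i | tightR S i] :|: [set u.1 | u in X]).
rewrite cardsU dis cards0 subn0 card_ord cI cX; lia.
Qed.

Lemma count_cols n m (S : {set 'I_n * 'I_m}) :
  3 * #|[set i | tightR S i]| + #|[set j | tightC S j]| <= m.
Proof.
set X := [set u in S | tightR S u.1].
have cX : #|X| = 3 * #|[set i | tightR S i]|.
  rewrite (card_rows X X).
  have E : forall i, #|[set u in X | u.1 == i]| = 3 * tightR S i.
    move=> i; case Ht : (tightR S i).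
      have -> : [set u in X | u.1 == i] = Rset S i.
        apply/setP => u; rewrite !inE; case: (u.1 =P i) => [->|]; by rewrite ?Ht ?andbT ?andbF.
      by move: Ht; rewrite /tightR => /andP [/eqP H3 _]; rewrite -/(rc S i) H3.
    rewrite muln0; apply/eqP; rewrite cards_eq0; apply/eqP/setP => u; rewrite !inE.
    by case: (u.1 =P i) => [->|]; rewrite ?Ht ?andbF.
  by rewrite (eq_bigr _ (fun i _ => E i)) -big_distrr /= sum_ind1.
have inj : {in X &, injective (fun u : 'I_n * 'I_m => u.2)}.
  move=> u u'; rewrite !inE => /andP [uS tu] /andP [u'S tu'] e.
  have : u \in [set x | cc S x.2 == 1].
    by move: tu => /andP [_ /subsetP]; apply; rewrite !inE uS eqxx.
  rewrite inE /cc => /cards1P [x Ex].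
  have : u \in Cset S u.2 by rewrite !inE uS eqxx.
  have : u' \in Cset S u.2 by rewrite !inE u'S e eqxx.
  by rewrite Ex !inE => /eqP -> /eqP ->.
have cI := card_in_imset inj.
have dis : [set j | tightC S j] :&: [set u.2 | u in X] = set0.
  apply/setP => j; rewrite !inE; apply/negP => /andP [/andP [/eqP h _] /imsetP [u uX Ei]]; subst.
  move: uX; rewrite !inE => /andP [uS /andP [_ /subsetP sub]].
  have := sub u; rewrite !inE uS eqxx => /(_ isT) /eqP.
  by move=> h1; have := etrans (esym h) h1.
have := max_card ([set j | tightC S j] :|: [set u.2 | u in X]).
rewrite cardsU dis cards0 subn0 card_ord cI cX; lia.
Qed.
Lemma cls0 n m s a b : 6 <= n -> n <= m -> a + 3 * b <= n -> 3 * a + b <= m ->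
  4 * (n + m) <= 5 * s + a + b -> (m + 5 * n) %% 8 = 0 ->
  2 * n <= s.+1 \/
  (0 <= n - 4 /\ 0 <= m - 4 /\ ((m - 4 - 0) + 5 * (n - 4 - 0)) %% 8 = 0 /\ (n - 4 - 0) <= 3 * (m - 4 - 0) /\ (m - 4 - 0) <= 3 * (n - 4 - 0) /\ 6 + 0 + 3 * ((n - 4 - 0) + (m - 4 - 0)) %/ 4 <= s).
Proof. intros. lia. Qed.

Lemma cls1 n m s a b : 6 <= n -> n <= m -> a + 3 * b <= n -> 3 * a + b <= m ->
  4 * (n + m) <= 5 * s + a + b -> (m + 5 * n) %% 8 = 1 ->
  2 * n <= s.+1 \/
  (1 <= n - 4 /\ 4 <= m - 4 /\ ((m - 4 - 4) + 5 * (n - 4 - 1)) %% 8 = 0 /\ (n - 4 - 1) <= 3 * (m - 4 - 4) /\ (m - 4 - 4) <= 3 * (n - 4 - 1) /\ 6 + 4 + 3 * ((n - 4 - 1) + (m - 4 - 4)) %/ 4 <= s).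
Proof. intros. lia. Qed.

Lemma cls2 n m s a b : 6 <= n -> n <= m -> a + 3 * b <= n -> 3 * a + b <= m ->
  4 * (n + m) <= 5 * s + a + b -> (m + 5 * n) %% 8 = 2 ->
  2 * n <= s.+1 \/
  (0 <= n - 3 /\ 0 <= m - 3 /\ ((m - 3 - 0) + 5 * (n - 3 - 0)) %% 8 = 0 /\ (n - 3 - 0) <= 3 * (m - 3 - 0) /\ (m - 3 - 0) <= 3 * (n - 3 - 0) /\ 5 + 0 + 3 * ((n - 3 - 0) + (m - 3 - 0)) %/ 4 <= s).
Proof. intros. lia. Qed.

Lemma cls3 n m s a b : 6 <= n -> n <= m -> a + 3 * b <= n -> 3 * a + b <= m ->
  4 * (n + m) <= 5 * s + a + b -> (m + 5 * n) %% 8 = 3 ->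
  2 * n <= s.+1 \/
  (1 <= n - 3 /\ 4 <= m - 3 /\ ((m - 3 - 4) + 5 * (n - 3 - 1)) %% 8 = 0 /\ (n - 3 - 1) <= 3 * (m - 3 - 4) /\ (m - 3 - 4) <= 3 * (n - 3 - 1) /\ 5 + 4 + 3 * ((n - 3 - 1) + (m - 3 - 4)) %/ 4 <= s).
Proof. intros. lia. Qed.

Lemma cls4 n m s a b : 6 <= n -> n <= m -> a + 3 * b <= n -> 3 * a + b <= m ->
  4 * (n + m) <= 5 * s + a + b -> (m + 5 * n) %% 8 = 4 ->
  2 * n <= s.+1 \/
  (2 <= n - 4 /\ 2 <= m - 4 /\ ((m - 4 - 2) + 5 * (n - 4 - 2)) %% 8 = 0 /\ (n - 4 - 2) <= 3 * (m - 4 - 2) /\ (m - 4 - 2) <= 3 * (n - 4 - 2) /\ 6 + 4 + 3 * ((n - 4 - 2) + (m - 4 - 2)) %/ 4 <= s).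
Proof. intros. lia. Qed.

Lemma cls5 n m s a b : 6 <= n -> n <= m -> a + 3 * b <= n -> 3 * a + b <= m ->
  4 * (n + m) <= 5 * s + a + b -> (m + 5 * n) %% 8 = 5 ->
  2 * n <= s.+1 \/
  (4 <= n - 4 /\ 1 <= m - 4 /\ ((m - 4 - 1) + 5 * (n - 4 - 4)) %% 8 = 0 /\ (n - 4 - 4) <= 3 * (m - 4 - 1) /\ (m - 4 - 1) <= 3 * (n - 4 - 4) /\ 6 + 4 + 3 * ((n - 4 - 4) + (m - 4 - 1)) %/ 4 <= s) \/
  6 + 2 * (n - 4) <= s.
Proof. intros. lia. Qed.

Lemma cls6 n m s a b : 6 <= n -> n <= m -> a + 3 * b <= n -> 3 * a + b <= m ->
  4 * (n + m) <= 5 * s + a + b -> (m + 5 * n) %% 8 = 6 ->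
  2 * n <= s.+1 \/
  (5 <= n - 4 /\ 5 <= m - 4 /\ ((m - 4 - 5) + 5 * (n - 4 - 5)) %% 8 = 0 /\ (n - 4 - 5) <= 3 * (m - 4 - 5) /\ (m - 4 - 5) <= 3 * (n - 4 - 5) /\ 6 + 8 + 3 * ((n - 4 - 5) + (m - 4 - 5)) %/ 4 <= s).
Proof. intros. lia. Qed.

Lemma cls7 n m s a b : 6 <= n -> n <= m -> a + 3 * b <= n -> 3 * a + b <= m ->
  4 * (n + m) <= 5 * s + a + b -> (m + 5 * n) %% 8 = 7 ->
  2 * n <= s.+1 \/
  (4 <= n - 3 /\ 1 <= m - 3 /\ ((m - 3 - 1) + 5 * (n - 3 - 4)) %% 8 = 0 /\ (n - 3 - 4) <= 3 * (m - 3 - 1) /\ (m - 3 - 1) <= 3 * (n - 3 - 4) /\ 5 + 4 + 3 * ((n - 3 - 4) + (m - 3 - 1)) %/ 4 <= s).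
Proof. intros. lia. Qed.


Lemma reach_gamma x y s : Reach x y s -> gamma2tKK x y <= s.
Proof. by move=> [S [/and3P [T _ _] <-]]; apply: gamma_ub. Qed.

Lemma gamma_cone ax ay sb x y : Reach ax ay sb -> ax <= x -> ay <= y ->
  ((y - ay) + 5 * (x - ax)) %% 8 = 0 -> x - ax <= 3 * (y - ay) -> y - ay <= 3 * (x - ax) ->
  gamma2tKK x y <= sb + 3 * ((x - ax) + (y - ay)) %/ 4.
Proof.
move=> Hb h1 h2 h3 h4 h5.
set i := (3 * (y - ay) - (x - ax)) %/ 8.
set j := (3 * (x - ax) - (y - ay)) %/ 8.
have ex : x = ax + i + 3 * j by rewrite /i /j; lia.
have ey : y = ay + 3 * i + j by rewrite /i /j; lia.
have es : sb + 3 * i + 3 * j = sb + 3 * ((x - ax) + (y - ay)) %/ 4 by rewrite /i /j; lia.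
have := reach_cone Hb i j; rewrite -ex -ey es; exact: reach_gamma.
Qed.

Lemma lower n m (S : {set 'I_n * 'I_m}) : n <= m -> total2dom (KK_rel n m) S ->
  2 * n <= #|S| \/ exists a b, [/\ a + 3 * b <= n, 3 * a + b <= m & 4 * (n + m) <= 5 * #|S| + a + b].
Proof.
move=> nm T.
case: (boolP [exists i, rc S i == 0]) => [/existsP [i /eqP Hi]|HR].
  by left; have := caseA_row T Hi; lia.
case: (boolP [exists j, cc S j == 0]) => [/existsP [j /eqP Hj]|HC].
  by left; exact: caseA_col T Hj.
right; exists #|[set i | tightR S i]|, #|[set j | tightC S j]|; split.
- exact: count_rows.
- exact: count_cols.
- have HR' : forall i, 0 < rc S i.
    by move=> i; rewrite lt0n; apply: contra HR => H; apply/existsP; exists i.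
  have HC' : forall j, 0 < cc S j.
    by move=> j; rewrite lt0n; apply: contra HC => H; apply/existsP; exists j.
  have := total_bound T HR' HC'; lia.
Qed.

Theorem theorem8 (n m : nat) (h6n : 6 <= n) (hnm : n <= m) :
  minn (gamma2tKK 3 3 + gamma2tKK (n - 3) (m - 3))
       (gamma2tKK 4 4 + gamma2tKK (n - 4) (m - 4)) <= gamma2tKK n m.
Proof.
have R13 : Reach 1 3 3 by apply: (full_reach (p:=1) (q:=3)).
have R31 : Reach 3 1 3 by apply: (full_reach (p:=3) (q:=1)).
have R14 : Reach 1 4 4 by apply: (full_reach (p:=1) (q:=4)).
have R41 : Reach 4 1 4 by apply: (full_reach (p:=4) (q:=1)).
have R22 : Reach 2 2 4 by apply: (full_reach (p:=2) (q:=2)).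
have R55 : Reach 5 5 8 := reach_sum R41 R14.
have R44 : Reach 4 4 6 := reach_sum R13 R31.
have g33 : gamma2tKK 3 3 <= 5 by apply: leq_trans (gamma_ub S33_t2d) S33_card.
have g44 : gamma2tKK 4 4 <= 6 := reach_gamma R44.
have gA : gamma2tKK (n - 3) (m - 3) <= 2 * (n - 3).
  have [T C] := @two_rows (n - 3) (m - 3) _ ltac:(lia) ltac:(lia) erefl.
  exact: leq_trans (gamma_ub T) C.
have gB : gamma2tKK (n - 4) (m - 4) <= 2 * (n - 4).
  have [T C] := @two_rows (n - 4) (m - 4) _ ltac:(lia) ltac:(lia) erefl.
  exact: leq_trans (gamma_ub T) C.
set L := minn _ _.
have LA : L <= 5 + gamma2tKK (n - 3) (m - 3) by rewrite /L geq_min leq_add2r g33.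
have LB : L <= 6 + gamma2tKK (n - 4) (m - 4) by rewrite /L geq_min leq_add2r g44 orbT.
apply: gamma_lb.
  have : 6 * n <= m * n by rewrite leq_mul2r; apply/orP; right; lia.
  move: LA gA; set g := gamma2tKK _ _; lia.
move=> S T.
have [H2|[a [b [Ha Hb Hs]]]] := lower hnm T.
  move: LA gA; set g := gamma2tKK _ _; lia.
have cl : (m + 5 * n) %% 8 < 8 by rewrite ltn_mod.
set s := #|S|.
have L3 : forall bx cy sb, Reach bx cy sb -> bx <= n - 3 -> cy <= m - 3 ->
   ((m - 3 - cy) + 5 * (n - 3 - bx)) %% 8 = 0 -> n - 3 - bx <= 3 * (m - 3 - cy) ->
   m - 3 - cy <= 3 * (n - 3 - bx) -> 5 + sb + 3 * ((n - 3 - bx) + (m - 3 - cy)) %/ 4 <= s -> L <= s.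
  move=> bx cy sb R h1 h2 h3 h4 h5 h6.
  have := gamma_cone R h1 h2 h3 h4 h5; move: LA h6; set g := gamma2tKK _ _; lia.
have L4 : forall bx cy sb, Reach bx cy sb -> bx <= n - 4 -> cy <= m - 4 ->
   ((m - 4 - cy) + 5 * (n - 4 - bx)) %% 8 = 0 -> n - 4 - bx <= 3 * (m - 4 - cy) ->
   m - 4 - cy <= 3 * (n - 4 - bx) -> 6 + sb + 3 * ((n - 4 - bx) + (m - 4 - cy)) %/ 4 <= s -> L <= s.
  move=> bx cy sb R h1 h2 h3 h4 h5 h6.
  have := gamma_cone R h1 h2 h3 h4 h5; move: LB h6; set g := gamma2tKK _ _; lia.
have F2 : 2 * n <= s.+1 -> L <= s by move: LA gA; set g := gamma2tKK _ _; lia.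
move: cl; case E : ((m + 5 * n) %% 8) => [|[|[|[|[|[|[|[|k]]]]]]]] // _.
- case: (cls0 h6n hnm Ha Hb Hs E) => [|[?[?[?[?[??]]]]]]; [exact: F2|exact: (L4 0 0 0 reach00)].
- case: (cls1 h6n hnm Ha Hb Hs E) => [|[?[?[?[?[??]]]]]]; [exact: F2|exact: (L4 1 4 4 R14)].
- case: (cls2 h6n hnm Ha Hb Hs E) => [|[?[?[?[?[??]]]]]]; [exact: F2|exact: (L3 0 0 0 reach00)].
- case: (cls3 h6n hnm Ha Hb Hs E) => [|[?[?[?[?[??]]]]]]; [exact: F2|exact: (L3 1 4 4 R14)].
- case: (cls4 h6n hnm Ha Hb Hs E) => [|[?[?[?[?[??]]]]]]; [exact: F2|exact: (L4 2 2 4 R22)].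
- case: (cls5 h6n hnm Ha Hb Hs E) => [|[[?[?[?[?[??]]]]]|]]; [exact: F2|exact: (L4 4 1 4 R41)|].
  by move: LB gB; set g := gamma2tKK _ _; lia.
- case: (cls6 h6n hnm Ha Hb Hs E) => [|[?[?[?[?[??]]]]]]; [exact: F2|exact: (L4 5 5 8 R55)].
- case: (cls7 h6n hnm Ha Hb Hs E) => [|[?[?[?[?[??]]]]]]; [exact: F2|exact: (L3 4 1 4 R41)].
Qed.
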